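(* Let $R$ be an involutive commutative semiring (with $0 \neq 1$), let $(K,\oplus,0)$ be a finite abelian group of order $d$ and exponent $k$, with $d$ invertible in $R$, and let $K$ be a subgroup of an abelian group $(P,\oplus,0)$ (in the paper: $K$ is the group of $X$-classical points, $P$ the group of $Z$-phases). Let $$\bigoplus_{r=1}^M n_r y_r = a, \qquad a \in K,$$ be an equation with positive integer coefficients $n_r$, admitting a solution $y_r := a_r$ in $P$, where the $a_r$ are pairwise distinct and non-zero. Choose $N \geq \sum_{r=1}^M n_r$ with $N \equiv 1 \pmod k$, set $n_0 := N - \sum_{r=1}^M n_r$, $a_0 := 0$, for $i = 1,\dots,N$ let $R(i)$ be the least $R' \geq 0$ with $i \leq \sum_{r=0}^{R'} n_r$, and put $\alpha_i := a_{R(i)}$; indices of $\alpha$ are read modulo $N$ with residues in $\{1,\dots,N\}$. Consider the measurement scenario with measurements $\mathcal{X} = \bigsqcup_{i=1}^N \{X_i^{0}, X_i^{a_1},\dots,X_i^{a_M}\}$, each with outcome set $K$, and measurement contexts $C_{control} = \{X_i^0 : i = 1,\dots,N\}$ and $C_{var_v} = \{X_i^{\alpha_{i+v-1}} : i=1,\dots,N\}$ for $v = 1,\dots,N$. Let $(e_C)$ be the $R$-valued empirical model (the outcome distribution of the Mermin measurement contexts on the $N$-partite GHZ state) given, for $\underline{b} \in K^C$, by $e_{C_{control}}(\underline{b}) = 1/d^{N-1}$ if $\bigoplus_{i} b_i = 0$ and $0$ otherwise, and $e_{C_{var_v}}(\underline{b}) = 1/d^{N-1}$ if $\bigoplus_i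 b_i = a$ and $0$ otherwise. Assume $R$ admits a semiring morphism $p: R \to \mathbb{B}$ with $p(1/d) = 1$. Then $(e_C)$ is $\mathrm{AvN}_{\mathbb{Z},K}$ if and only if the equation $\bigoplus_{r=1}^M n_r y_r = a$ admits no solution in $K$.
   Context: $\mathbb{B} = (\{0,1\},\vee,0,\wedge,1)$ is the boolean semiring. The possibilistic model associated with $(e_C)$ is $(p\circ e_C)$; its support on a context $C$ is $\mathcal{S}(C) := \{\underline{b} \in K^C : p(e_C(\underline{b})) = 1\}$. A $\mathbb{Z}$-linear equation valued in $K$ is a triple $\phi = (C, n, b)$ with $C$ a finite set, $n: C \to \mathbb{Z}$ and $b \in K$; an assignment $s: C \to K$ satisfies $\phi$ if $\bigoplus_{m \in C} n(m) s(m) = b$ in $K$. For a set $W$ of assignments $C \to K$, $\mathbb{T}_{\mathbb{Z}}(W)$ is the set of $\mathbb{Z}$-linear equations with index set $C$ satisfied by every $s \in W$. The model is $\mathrm{AvN}_{\mathbb{Z},K}$ (All-vs-Nothing) if there is no global assignment $s: \mathcal{X} \to K$ such that, for every context $C$ and every $\phi \in \mathbb{T}_{\mathbb{Z}}(\mathcal{S}(C))$, the restriction $s|_C$ satisfies $\phi$. *)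

(* Defs.v *)
From HB Require Import structures.
From mathcomp Require Import all_boot all_order all_algebra.
Set Implicit Arguments. Unset Strict Implicit. Unset Printing Implicit Defensive.
Import Order.TTheory GRing.Theory Num.Theory.
Local Open Scope ring_scope.

Definition semiring_involution (R : comNzSemiRingType) (star : R -> R) : Prop :=
  [/\ forall x, star (star x) = x,
      star 0 = 0, star 1 = 1,
      forall x y, star (x + y) = star x + star y
    & forall x y, star (x * y) = star x * star y].

Definition bool_semiring_morphism (R : comNzSemiRingType) (p : R -> bool) : Prop :=
  [/\ p 0 = false, p 1 = true,
      forall x y, p (x + y) = p x || p y
    & forall x y, p (x * y) = p x && p y].

Definition is_exponent (K : finZmodType) (k : nat) : Prop :=
  [/\ (0 < k)%N, forall x : K, x *+ k = 0
    & forall m, (0 < m)%N -> (forall x : K, x *+ m = 0) -> (k <= m)%N].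

Definition subgroup_embedding (K : finZmodType) (P : zmodType) (emb : K -> P) : Prop :=
  (forall x y, emb (x - y) = emb x - emb y) /\ injective emb.

Definition lin_sat (X : finType) (K : zmodType) (C : {set X})
    (n : {x : X | x \in C} -> int) (b : K) (s : {x : X | x \in C} -> K) : Prop :=
  \sum_(m : {x : X | x \in C}) (s m) *~ (n m) = b.

Definition support (X : finType) (K : zmodType) (R : comNzSemiRingType)
    (p : R -> bool) (C : {set X}) (eC : ({x : X | x \in C} -> K) -> R)
    (s : {x : X | x \in C} -> K) : Prop :=
  p (eC s) = true.

Definition theoryZ (X : finType) (K : zmodType) (C : {set X})
    (W : ({x : X | x \in C} -> K) -> Prop)
    (n : {x : X | x \in C} -> int) (b : K) : Prop :=
  forall s, W s -> lin_sat n b s.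

Definition AvN_Z (X : finType) (K : zmodType) (I : Type) (ctx : I -> {set X})
    (R : comNzSemiRingType) (p : R -> bool)
    (e : forall c : I, ({x : X | x \in ctx c} -> K) -> R) : Prop :=
  ~ exists s : X -> K,
      forall (c : I) (n : {x : X | x \in ctx c} -> int) (b : K),
        theoryZ (support p (e c)) n b ->
        lin_sat n b (fun m => s (val m)).

Arguments AvN_Z {X K I} ctx {R} p e.

(* n_r for r = 0..M, with n_0 := N - sum_{r=1}^M n_r ; the paper's n_r (r>=1)
   is here n (r-1) with n : 'I_M -> nat *)
Definition nfull (M : nat) (n : 'I_M -> nat) (N : nat) (r : nat) : nat :=
  if r is r'.+1 then oapp n 0%N (insub r') else (N - \sum_(q < M) n q)%N.

Definition Rsel (M : nat) (n : 'I_M -> nat) (N : nat) (i : nat) : nat :=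
  find (fun R' => (i <= \sum_(r < R'.+1) nfull n N r)%N) (iota 0 M.+1).

(* reading an index modulo N with residue in {1,...,N} *)
Definition modN (N i : nat) : nat := ((i.-1 %% N).+1)%N.

(* Measurements: X_i^{b}, site i = j+1 for j : 'I_N, and label l : 'I_M.+1
   where l = 0 stands for the label a_0 = 0 and l = r+1 for a_{r+1}.
   Contexts indexed by c : 'I_N.+1: c = 0 is C_control, c = v >= 1 is C_var_v. *)
Definition ghz_ctx (M : nat) (n : 'I_M -> nat) (N : nat) (c : 'I_N.+1)
    : {set 'I_N * 'I_M.+1} :=
  if c == ord0 then [set (j, ord0) | j : 'I_N]
  else [set (j, inord (Rsel n N (modN N (j.+1 + c - 1)))) | j : 'I_N].

Arguments ghz_ctx {M} n N c.

(* the empirical model: 1/d^{N-1} (dinv = 1/d) on outcomes whose sum is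
   0 (control) resp. a (var_v), and 0 otherwise *)
Definition ghz_model (R : comNzSemiRingType) (K : finZmodType) (dinv : R) (a : K)
    (M : nat) (n : 'I_M -> nat) (N : nat) (c : 'I_N.+1)
    (b : {x : 'I_N * 'I_M.+1 | x \in ghz_ctx n N c} -> K) : R :=
  if \sum_(m : {x : 'I_N * 'I_M.+1 | x \in ghz_ctx n N c}) b m
       == (if c == ord0 then 0 else a)
  then dinv ^+ N.-1 else 0.

Arguments ghz_model {R K} dinv a {M} n N c b.

(* Main.v *)
Require Import Defs.
From HB Require Import structures.
From mathcomp Require Import all_boot all_order all_algebra.
From mathcomp Require Import zify.
Import Order.TTheory GRing.Theory Num.Theory.
Local Open Scope ring_scope.

Definition cum (c : nat -> nat) (r : nat) : nat := (\sum_(q < r.+1) c q)%N.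
Definition sel (c : nat -> nat) (m j : nat) : nat :=
  find (fun R' => (j <= cum c R')%N) (iota 0 m.+1).

Lemma psum_mono (c : nat -> nat) x y : (x <= y)%N -> (\sum_(q < x) c q <= \sum_(q < y) c q)%N.
Proof.
move=> le; rewrite -!(big_mkord xpredT) [X in (_ <= X)%N](@big_cat_nat _ _ _ x) //=.
exact: leq_addr.
Qed.

Lemma sel_eq (c : nat -> nat) (m r j : nat) : (r <= m)%N ->
  (\sum_(q < r) c q < j <= \sum_(q < r) c q + c r)%N -> sel c m j = r.
Proof.
move=> rm /andP[lo hi].
have cumr : cum c r = (\sum_(q < r) c q + c r)%N by rewrite /cum big_ord_recr.
rewrite /sel.
have -> : m.+1 = (r + (m - r).+1)%N by rewrite addnS subnKC.
rewrite iotaD find_cat.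
have -> : has (fun R' => (j <= cum c R')%N) (iota 0 r) = false.
  apply/hasPn => x; rewrite mem_iota add0n => /andP[_ xr]; rewrite -ltnNge.
  apply: leq_ltn_trans lo; exact: psum_mono.
by rewrite size_iota add0n /= cumr hi addn0.
Qed.

Lemma sum_sel_aux (V : zmodType) (f : nat -> V) (c : nat -> nat) (m r : nat) :
  (r <= m)%N ->
  \sum_(0 <= i < cum c r) f (sel c m i.+1) = \sum_(q < r.+1) f q *+ c q.
Proof.
elim: r => [|r IH] rm.
  rewrite big_ord_recr big_ord0 /cum big_ord_recr big_ord0 /= add0r add0n.
  rewrite (eq_big_nat _ _ (F2 := fun _ => f 0%N)) ?sumr_const_nat ?subn0 //.
  move=> i /andP[_ hi]; congr f; apply: sel_eq => //.
  by rewrite big_ord0.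
have cumS : cum c r.+1 = (cum c r + c r.+1)%N by rewrite /cum [in LHS]big_ord_recr.
rewrite cumS (@big_cat_nat _ _ _ (cum c r)) //= ?leq_addr // IH ?(ltnW rm) //.
rewrite [RHS]big_ord_recr /=; congr (_ + _).
rewrite (eq_big_nat _ _ (F2 := fun _ => f r.+1)) ?sumr_const_nat ?addKn //.
move=> i /andP[lo hi]; congr f; apply: sel_eq => //.
by rewrite ltnS lo.
Qed.

Lemma sum_rot (V : zmodType) (h : nat -> V) (N x : nat) : (0 < N)%N ->
  \sum_(v < N) h ((x + v) %% N)%N = \sum_(i < N) h i.
Proof.
case: N => [//|N'] _.
rewrite [RHS](reindex_inj (addrI (inZp x : 'I_N'.+1))) /=.
apply: eq_bigr => v _; congr h.
by rewrite /= modnDml.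
Qed.

Section Main.
Variables (M : nat) (n : 'I_M -> nat) (N : nat).
Hypothesis N0 : (0 < N)%N.
Hypothesis SN : (\sum_(r < M) n r <= N)%N.

Lemma nfullS (i : 'I_M) : nfull n N i.+1 = n i.
Proof. by rewrite /nfull /= valK. Qed.

Lemma cum_full : cum (nfull n N) M = N.
Proof.
rewrite /cum big_ord_recl.
under eq_bigr => i _ do rewrite lift0 nfullS.
exact: subnK.
Qed.

Lemma sum_labels (V : zmodType) (F : 'I_M.+1 -> V) (x : nat) :
  \sum_(j < N) F (inord (Rsel n N ((x + j) %% N).+1)) =
  F (inord 0) *+ nfull n N 0 + \sum_(i < M) F (inord i.+1) *+ n i.
Proof.
rewrite (@sum_rot V (fun i => F (inord (Rsel n N i.+1))) N x) //.
have := @sum_sel_aux V (fun r => F (inord r)) (nfull n N) M M (leqnn M).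
rewrite cum_full big_mkord => ->.
rewrite big_ord_recl; congr (_ + _).
by apply: eq_bigr => i _; rewrite lift0 nfullS.
Qed.

Definition lab (c : 'I_N.+1) (j : 'I_N) : 'I_M.+1 :=
  if c == ord0 then ord0 else inord (Rsel n N (modN N (j.+1 + c - 1))).

Lemma sum_ctx (V : zmodType) (c : 'I_N.+1) (F : 'I_N * 'I_M.+1 -> V) :
  \sum_(m : {x | x \in ghz_ctx n N c}) F (val m) = \sum_(j < N) F (j, lab c j).
Proof.
rewrite -(big_sub (mem (ghz_ctx n N c))).
have -> : ghz_ctx n N c = [set (j, lab c j) | j : 'I_N].
  by rewrite /ghz_ctx /lab; case: (c == ord0).
rewrite big_imset //=.
by move=> x y _ _ [].
Qed.

End Main.
Arguments lab {M} n N c j.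
Arguments sum_ctx {M n N V c} F.
Arguments sum_labels {M n N} N0 SN {V} F x.

Lemma mulrn_modk (K : zmodType) (k : nat) (x : K) (m : nat) :
  (forall y : K, y *+ k = 0) -> x *+ m = x *+ (m %% k).
Proof.
move=> hk; rewrite {1}(divn_eq m k) mulrnDr mulnC mulrnA hk mul0rn add0r //.
Qed.

Theorem mainTheorem2
    (R : comNzSemiRingType) (star : R -> R)
    (K : finZmodType) (k : nat) (P : zmodType) (emb : K -> P)
    (dinv : R) (p : R -> bool)
    (M : nat) (n : 'I_M -> nat) (a : K) (ar : 'I_M -> P) (N : nat) :
  semiring_involution star ->
  is_exponent K k ->
  #|K|%:R * dinv = 1 ->
  subgroup_embedding emb ->
  (forall r, (0 < n r)%N) ->
  injective ar ->
  (forall r, ar r != 0) ->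
  \sum_(r < M) ar r *+ n r = emb a ->
  (0 < N)%N ->
  (\sum_(r < M) n r <= N)%N ->
  N = 1 %[mod k] ->
  bool_semiring_morphism p ->
  p dinv = true ->
  AvN_Z (ghz_ctx n N) p (ghz_model dinv a n N)
  <-> ~ (exists y : 'I_M -> K, \sum_(r < M) y r *+ n r = a).
Proof.
move=> _ [kpos kexp _] _ _ _ _ _ _ N0 SN Nmod [p0 p1 padd pmul] pd.
pose tgt (c : 'I_N.+1) : K := if c == ord0 then 0 else a.
have pdN : p (dinv ^+ N.-1) = true.
  by elim: N.-1 => [|q IH]; rewrite ?expr0 ?exprS ?pmul ?pd ?IH.
have supp : forall c s, Defs.support p (ghz_model dinv a n N c) s <->
    \sum_m s m = tgt c.
  move=> c s; rewrite /Defs.support /ghz_model /tgt.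
  by case: (c == ord0); case: eqP => H; rewrite ?pdN ?p0; split.
have key : (exists s : 'I_N * 'I_M.+1 -> K,
      forall (c : 'I_N.+1) (n' : {x | x \in ghz_ctx n N c} -> int) (b : K),
        theoryZ (Defs.support p (ghz_model dinv a n N c)) n' b ->
        lin_sat n' b (fun m => s (val m)))
    <-> exists s : 'I_N * 'I_M.+1 -> K,
      forall c, \sum_(j < N) s (j, lab n N c j) = tgt c.
  split=> -[s hs]; exists s.
    move=> c; have h := hs c (fun _ => 1%R) (tgt c).
    have : lin_sat (fun _ => 1%R) (tgt c) (fun m : {x | x \in ghz_ctx n N c} => s (val m)).
      apply: h => s' /supp Hs; rewrite /lin_sat -Hs.
      by apply: eq_bigr => m _; rewrite mulr1z.
    rewrite /lin_sat => H; rewrite -(sum_ctx (fun x => s x)) -H.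
    by apply: eq_bigr => m _; rewrite mulr1z.
  move=> c n' b hT; apply: hT; apply/supp.
  by rewrite (sum_ctx (fun x => s x)).
have i0 : (inord 0 : 'I_M.+1) = ord0 by apply: val_inj; rewrite /= inordK.
suff E : (exists s : 'I_N * 'I_M.+1 -> K,
      forall c, \sum_(j < N) s (j, lab n N c j) = tgt c)
    <-> (exists y : 'I_M -> K, \sum_(r < M) y r *+ n r = a).
  by rewrite /AvN_Z; split=> H1 H2; apply: H1; [apply/key/E | apply/E/key].
split.
  move=> [s hs]; exists (fun i => \sum_(j < N) s (j, inord i.+1)).
  have h0 : \sum_(j < N) s (j, inord 0) = 0.
    rewrite i0; transitivity (\sum_(j < N) s (j, lab n N ord0 j)); last exact: hs ord0.
    by apply: eq_bigr => j _; rewrite /lab eqxx.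
  have hv : forall v : 'I_N,
      \sum_(j < N) s (j, inord (Rsel n N ((j + v) %% N).+1)) = a.
    move=> v; have lv : (lift ord0 v == ord0) = false by rewrite eq_sym (negbTE (neq_lift _ _)).
    transitivity (\sum_(j < N) s (j, lab n N (lift ord0 v) j)); last by rewrite hs /tgt lv.
    apply: eq_bigr => j _; rewrite /lab lv lift0.
    by congr (s (_, inord (Rsel n N _))); rewrite /modN addSn subn1 /= addnS.
  have tot : \sum_(v < N) \sum_(j < N) s (j, inord (Rsel n N ((j + v) %% N).+1))
      = a *+ N by rewrite (eq_bigr _ (fun v _ => hv v)) sumr_const card_ord.
  rewrite exchange_big /= in tot.
  have tj : forall j : 'I_N, \sum_(v < N) s (j, inord (Rsel n N ((j + v) %% N).+1)) =
      s (j, inord 0) *+ nfull n N 0 + \sum_(i < M) s (j, inord i.+1) *+ n i.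
    by move=> j; exact: (sum_labels N0 SN (fun l => s (j, l)) j).
  rewrite (eq_bigr _ (fun j _ => tj j)) in tot.
  rewrite big_split /= sumrMnl h0 mul0rn add0r exchange_big /= in tot.
  have -> : a = a *+ N by rewrite (@mulrn_modk K k a N kexp) Nmod -(@mulrn_modk K k a 1 kexp) mulr1n.
  by rewrite -tot; apply: eq_bigr => r _; rewrite sumrMnl.
move=> [y hy].
pose G (l : 'I_M.+1) : K := if val l is r.+1 then oapp y 0 (insub r) else 0.
exists (fun x => G x.2) => c; rewrite /lab /tgt; case: eqP => [_|/eqP cne].
  by rewrite big1.
have c0 : (0 < c)%N by case: c cne => [[|c'] //].
have hm : forall j : 'I_N, modN N (j.+1 + c - 1) = ((c.-1 + j) %% N).+1.
  by move=> j; rewrite /modN; congr ((_ %% N).+1); lia.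
rewrite (eq_bigr (fun j : 'I_N => G (inord (Rsel n N ((c.-1 + j) %% N).+1)))); last first.
  by move=> j _; rewrite /= hm.
rewrite (sum_labels N0 SN G) /G /= inordK // mul0rn add0r -hy.
apply: eq_bigr => i _; rewrite inordK ?valK //.
by rewrite ltnS ltn_ord.
Qed.
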